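(* Let $f_0$ be a probability density on $\mathbb{R}$ with $f_0(-z)=f_0(z)$ for all $z\in\mathbb{R}$ and $f_0$ strictly decreasing on $[0,\infty)$. Let $X$ have density $\frac{1}{\sigma}f_0\big(\frac{x-\mu}{\sigma}\big)$ with $\mu\in\mathbb{R}$, $\sigma>0$ unknown. Given $0<\alpha<1$, let $c>0$ satisfy $\int_0^c f_0(z)\,dz = \alpha/2$ (such $c$ exists). Then $$\inf_{\mu\in\mathbb{R},\,\sigma>0} P_{\mu,\sigma}\Big(\sigma \le \frac{|X|}{c}\Big) = 1-\alpha.$$ *)

(* Defs.v *)
From HB Require Import structures.
From mathcomp Require Import all_boot all_order all_algebra.
From mathcomp Require Import all_classical all_reals all_analysis.
Set Implicit Arguments. Unset Strict Implicit. Unset Printing Implicit Defensive.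
Import Order.TTheory GRing.Theory Num.Theory.
Local Open Scope classical_set_scope.
Local Open Scope ring_scope.

Definition is_prob_density (R : realType) (f0 : R -> R) : Prop :=
  [/\ measurable_fun setT f0,
      (forall x, 0 <= f0 x) &
      (\int[@lebesgue_measure R]_x (f0 x)%:E = 1)%E].

Definition loc_scale_prob (R : realType) (f0 : R -> R) (mu sigma : R)
    (A : set R) : \bar R :=
  (\int[@lebesgue_measure R]_(x in A) (sigma^-1 * f0 ((x - mu) / sigma))%:E)%E.

(* Main.v *)
Require Import Defs.
From HB Require Import structures.
From mathcomp Require Import all_boot all_order all_algebra.
From mathcomp Require Import all_classical all_reals all_analysis.
From mathcomp Require Import measurable_realfun.
From mathcomp Require Import ring lra.
Import Order.TTheory GRing.Theory Num.Theory.
Local Open Scope classical_set_scope.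
Local Open Scope ring_scope.

Lemma affine_measurable (R : realType) (s m : R) :
  measurable_fun setT (fun x : R => (x - m) / s).
Proof.
rewrite (_ : (fun x : R => (x - m) / s) = ( *%R s^-1) \o (fun x => x - m)); last first.
  by apply/funext => x /=; rewrite mulrC.
apply: measurableT_comp => //.
exact: measurable_funB.
Qed.

Lemma affine_preimage_oc (R : realType) (s m a b : R) : 0 < s ->
  (fun x : R => (x - m) / s) @^-1` `]a, b] = `]s * a + m, s * b + m]%classic.
Proof.
move=> s0; apply/seteqP; split => x /=; rewrite !in_itv/=.
  by rewrite ler_pdivrMr// ltr_pdivlMr// => /andP[h1 h2]; apply/andP; split; lra.
by move=> /andP[h1 h2]; rewrite ler_pdivrMr// ltr_pdivlMr//; apply/andP; split; lra.
Qed.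

Lemma affine_push (R : realType) (s m : R) (A : set R) : 0 < s -> measurable A ->
  @lebesgue_measure R A =
    ((s^-1)%:E * @lebesgue_measure R ((fun x : R => (x - m) / s)%R @^-1` A))%E.
Proof.
move=> s0 mA.
have s'0 : 0 <= s^-1 by rewrite invr_ge0 ltW.
pose P := @measure_function_pushforward__canonical__measure_function_Measure _ _ _
  (measurableTypeR R) R (@lebesgue_measure R)
  (fun x : R => (x - m) / s)%R (@affine_measurable R s m).
rewrite (@lebesgue_measure_unique R (mscale (NngNum s'0) P
  : {measure set (measurableTypeR R) -> \bar R}) _ A mA)//.
move=> _ [[a b] _ <-] /=.
rewrite /mscale/= /pushforward affine_preimage_oc//.
rewrite !lebesgue_measure_itv/=.
rewrite !lte_fin ltrD2r ltr_pM2l//.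
case: ifPn => _; last by rewrite mule0.
rewrite -!EFinD -EFinM; congr EFin.
by rewrite opprD addrACA subrr addr0 -mulrBr mulKf// gt_eqF.
Qed.

Lemma affine_integral (R : realType) (s m : R) (B : set R) (g : R -> R) : 0 < s ->
  measurable B -> measurable_fun setT g -> (forall z, 0 <= g z) ->
  (\int[@lebesgue_measure R]_(x in (fun x : R => (x - m) / s)%R @^-1` B)
      (s^-1 * g ((x - m) / s))%:E
  = \int[@lebesgue_measure R]_(z in B) (g z)%:E)%E.
Proof.
move=> s0 mB mg g0.
have s'0 : 0 <= s^-1 by rewrite invr_ge0 ltW.
pose P := @measure_function_pushforward__canonical__measure_function_Measure _ _ _
  (measurableTypeR R) R (@lebesgue_measure R)
  (fun x : R => (x - m) / s)%R (@affine_measurable R s m).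
rewrite (@eq_measure_integral _ (measurableTypeR R) _ B (mscale (NngNum s'0) P
  : {measure set (measurableTypeR R) -> \bar R})); last first.
  by move=> A mA _; exact: affine_push.
rewrite ge0_integral_mscale//=; last first.
- by move=> z _; rewrite lee_fin.
- by apply/measurable_EFinP; apply: measurable_funTS.
rewrite ge0_integral_pushforward//=; last first.
- by move=> z _; rewrite lee_fin.
- by apply/measurable_EFinP; apply: measurable_funTS.
  exact: affine_measurable.
under eq_integral do rewrite EFinM.
rewrite ge0_integralZl_EFin//.
- by rewrite -[X in measurable X]setTI; exact: affine_measurable.
- by move=> x _; rewrite lee_fin.
- apply: measurable_funTS; apply: measurableT_comp => //.
  exact: measurableT_comp (@affine_measurable R s m).
Qed.

Lemma shift_integral (R : realType) (t : R) (B : set R) (g : R -> R) :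
  measurable B -> measurable_fun setT g -> (forall z, 0 <= g z) ->
  (\int[@lebesgue_measure R]_(x in (fun x : R => x + t)%R @^-1` B) (g (x + t))%:E
  = \int[@lebesgue_measure R]_(z in B) (g z)%:E)%E.
Proof.
move=> mB mg g0.
have := @affine_integral R 1 (- t) B g ltr01 mB mg g0.
have -> : (fun x : R => (x - - t) / 1) = (fun x => x + t).
  by apply/funext => x; rewrite opprK invr1 mulr1.
have h (y : R) : 1^-1 * g ((y - - t) / 1) = g (y + t).
  by rewrite invr1 mul1r opprK mulr1.
by move=> <-; apply: eq_integral => x _; rewrite h.
Qed.

Lemma reflect_integral (R : realType) (B : set R) (g : R -> R) :
  measurable B -> measurable_fun setT g -> (forall z, 0 <= g z) ->
  (\int[@lebesgue_measure R]_(x in (fun x : R => - x)%R @^-1` B) (g (- x))%:E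
  = \int[@lebesgue_measure R]_(z in B) (g z)%:E)%E.
Proof.
move=> mB mg g0.
have mN : measurable_fun setT (fun x : R => - x)%R.
  exact: continuous_measurable_fun opp_continuous.
pose P := @measure_function_pushforward__canonical__measure_function_Measure _ _ _
  (measurableTypeR R) R (@lebesgue_measure R) (fun x : R => - x)%R mN.
transitivity (\int[P]_(z in B) (g z)%:E)%E.
  rewrite ge0_integral_pushforward//=.
  - by apply/measurable_EFinP; apply: measurable_funTS.
  - by move=> z _; rewrite lee_fin.
apply: eq_measure_integral => //= A mA AS.
by rewrite /P/= lebesgue_measureN.
Qed.

Lemma sym_abs (R : realType) (f0 : R -> R) :
  (forall z, f0 (- z) = f0 z) -> forall x, f0 `|x| = f0 x.
Proof.
move=> hs x; have [h|h] := leP 0 x; first by rewrite ger0_norm.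
by rewrite ltr0_norm// hs.
Qed.

Lemma f0_le (R : realType) (f0 : R -> R) :
  (forall z, f0 (- z) = f0 z) ->
  (forall x y, 0 <= x -> x < y -> f0 y < f0 x) ->
  forall x y, `|y| <= `|x| -> f0 x <= f0 y.
Proof.
move=> hs hd x y; rewrite -(@sym_abs R f0 hs x) -(@sym_abs R f0 hs y).
rewrite le_eqVlt => /orP[/eqP->//|h].
by apply/ltW/hd.
Qed.

Lemma disjP (T : Type) (A B : set T) :
  (forall x, A x -> B x -> False) -> [disjoint A & B].
Proof.
move=> h; rewrite disj_set2E; apply/eqP; rewrite -subset0 => x [].
exact: h.
Qed.

Lemma alpha_oo (R : realType) (f0 : R -> R) (alpha c : R) :
  measurable_fun setT f0 -> (forall x, 0 <= f0 x) ->
  (forall z, f0 (- z) = f0 z) -> 0 < c ->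
  (\int[@lebesgue_measure R]_(z in `[0%R, c]) (f0 z)%:E)%E = (alpha / 2)%:E ->
  (\int[@lebesgue_measure R]_(z in `](- c)%R, c[) (f0 z)%:E)%E = alpha%:E.
Proof.
move=> hm hpos hs c0 hc.
have mf : forall D, measurable_fun D (fun x => (f0 x)%:E).
  by move=> D; apply/measurable_EFinP; exact: measurable_funTS.
have -> : `]- c, c[%classic = `]- c, 0[%classic `|` `[0, c[%classic.
  apply/seteqP; split => x /=; rewrite !in_itv/=.
    by move=> /andP[h1 h2]; have [h|h] := ltP x 0; [left|right]; apply/andP; split.
  by case=> /andP[h1 h2]; apply/andP; split => //; lra.
rewrite ge0_integral_setU//; last 2 first.
- by move=> x _; rewrite lee_fin.
- by apply: disjP => x /=; rewrite !in_itv/= => /andP[_ h1] /andP[h2 _]; lra.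
rewrite [X in (_ + X)%E]integral_itv_bndo_bndc// hc.
have -> : `]- c, 0[%classic = (fun x : R => - x) @^-1` `]0, c[%classic.
  apply/seteqP; split => x /=; rewrite !in_itv/= => /andP[h1 h2]; apply/andP; split; lra.
under [X in (X + _)%E]eq_integral => x _ do rewrite -hs.
rewrite reflect_integral//.
rewrite -(integral_itv_bndoo true false)// hc.
  by rewrite -EFinD; congr EFin; field.
exact: mf.
Qed.

Lemma Fbound_pos (R : realType) (f0 : R -> R) (c m : R) :
  measurable_fun setT f0 -> (forall x, 0 <= f0 x) ->
  (forall z, f0 (- z) = f0 z) ->
  (forall x y, 0 <= x -> x < y -> f0 y < f0 x) ->
  0 < c -> 0 <= m ->
  (\int[@lebesgue_measure R]_(z in `](- c - m)%R, (c - m)%R[) (f0 z)%:E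
   <= \int[@lebesgue_measure R]_(z in `](- c)%R, c[) (f0 z)%:E)%E.
Proof.
move=> hm hpos hs hd c0 m0.
have mf : forall D, measurable_fun D (fun x => (f0 x)%:E).
  by move=> D; apply/measurable_EFinP; exact: measurable_funTS.
have [h2c|h2c] := leP (2 * c) m.
  apply: (@le_trans _ _
    (\int[@lebesgue_measure R]_(z in `](- c - m)%R, (c - m)%R[) (f0 (z + m))%:E)%E).
    apply: ge0_le_integral => //.
    - by move=> x _; rewrite lee_fin.
    - exact: mf.
    - apply/measurable_EFinP; apply: measurable_funTS.
      apply: measurableT_comp => //; exact: measurable_funD.
    move=> x; rewrite /= in_itv/= => /andP[h1 h2]; rewrite lee_fin.
    apply: (@f0_le R f0 hs hd); rewrite (ltr0_norm (x := x)); last lra.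
    by rewrite ler_norml; apply/andP; split; lra.
  have -> : `](- c - m)%R, (c - m)%R[%classic =
      (fun x : R => x + m) @^-1` `](- c)%R, c[%classic.
    apply/seteqP; split => x /=; rewrite !in_itv/= => /andP[h1 h2];
      apply/andP; split; lra.
  by rewrite shift_integral.
have -> : `](- c - m)%R, (c - m)%R[%classic = `](- c - m)%R, (- c)%R]%classic `|` `](- c)%R, (c - m)%R[%classic.
  apply/seteqP; split => x /=; rewrite !in_itv/=.
    by move=> /andP[h1 h2]; have [h|h] := leP x (- c); [left|right]; apply/andP; split => //; lra.
  by case=> /andP[h1 h2]; apply/andP; split => //; lra.
rewrite ge0_integral_setU//; last 2 first.
- by move=> x _; rewrite lee_fin.
- by apply: disjP => x /=; rewrite !in_itv/= => /andP[_ h1] /andP[h2 _]; lra.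
apply: (@le_trans _ _
  (\int[@lebesgue_measure R]_(z in `](- c - m)%R, (- c)%R]) (f0 (z + 2 * c))%:E
   + \int[@lebesgue_measure R]_(z in `](- c)%R, (c - m)%R[) (f0 z)%:E)%E).
  apply: leeD2r; apply: ge0_le_integral => //.
  - by move=> x _; rewrite lee_fin.
  - exact: mf.
  - apply/measurable_EFinP; apply: measurable_funTS.
    apply: measurableT_comp => //; exact: measurable_funD.
  move=> x; rewrite /= in_itv/= => /andP[h1 h2]; rewrite lee_fin.
  apply: (@f0_le R f0 hs hd); rewrite (ltr0_norm (x := x)); last lra.
  by rewrite ler_norml; apply/andP; split; lra.
have -> : `](- c - m)%R, (- c)%R]%classic =
    (fun x : R => x + 2 * c) @^-1` `](c - m)%R, c]%classic.
  apply/seteqP; split => x /=; rewrite !in_itv/= => /andP[h1 h2];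
    apply/andP; split; lra.
rewrite shift_integral// addeC -ge0_integral_setU//; last 2 first.
- by move=> x _; rewrite lee_fin.
- by apply: disjP => x /=; rewrite !in_itv/= => /andP[_ h1] /andP[h2 _]; lra.
rewrite integral_itv_bndo_bndc//.
apply: ge0_subset_integral => //.
- exact: measurableU.
- exact: mf.
- by move=> x _; rewrite lee_fin.
- move=> x /=; rewrite !in_itv/=.
  by case=> /andP[h1 h2]; apply/andP; split => //; lra.
all: try exact: mf.
Qed.

Lemma Fbound (R : realType) (f0 : R -> R) (c m : R) :
  measurable_fun setT f0 -> (forall x, 0 <= f0 x) ->
  (forall z, f0 (- z) = f0 z) ->
  (forall x y, 0 <= x -> x < y -> f0 y < f0 x) ->
  0 < c ->
  (\int[@lebesgue_measure R]_(z in `](- c - m)%R, (c - m)%R[) (f0 z)%:E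
   <= \int[@lebesgue_measure R]_(z in `](- c)%R, c[) (f0 z)%:E)%E.
Proof.
move=> hm hpos hs hd c0.
have [m0|m0] := leP 0 m; first exact: Fbound_pos.
have -> : `](- c - m)%R, (c - m)%R[%classic =
    (fun x : R => - x) @^-1` `](- c - - m)%R, (c - - m)%R[%classic.
  apply/seteqP; split => x /=; rewrite !in_itv/= => /andP[h1 h2];
    apply/andP; split; lra.
rewrite (_ : (\int[@lebesgue_measure R]_(x in (fun x : R => - x)%R @^-1` `](- c - - m)%R, (c - - m)%R[%classic) (f0 x)%:E = \int[@lebesgue_measure R]_(x in (fun x : R => - x)%R @^-1` `](- c - - m)%R, (c - - m)%R[%classic) (f0 (- x))%:E)%E); last first.
  by apply: eq_integral => x _; rewrite hs.
rewrite reflect_integral//.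
apply: Fbound_pos => //; lra.
Qed.

Lemma set_eq_aux (R : realType) (sigma mu c x : R) : 0 < sigma -> 0 < c ->
  (sigma <= `|x| / c) <-> ~ ((x - mu) / sigma \in `](- c - mu / sigma)%R, (c - mu / sigma)%R[).
Proof.
move=> s0 c0.
set z := (x - mu) / sigma; set w := mu / sigma.
have ex : x = sigma * (z + w).
  by rewrite mulrDr /z /w !(mulrC sigma) !divfK ?gt_eqF // subrK.
rewrite ex normrM (gtr0_norm s0) ler_pdivlMr// ler_pM2l// leNgt ltr_norml in_itv/=.
have e1 : (- c < z + w) = (- c - w < z) by apply/idP/idP => h; lra.
have e2 : (z + w < c) = (z < c - w) by apply/idP/idP => h; lra.
rewrite e1 e2; split; [by move=> /negP | by move=> /negP].
Qed.

Lemma key (R : realType) (f0 : R -> R) (c mu sigma : R) :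
  measurable_fun setT f0 -> (forall x, 0 <= f0 x) ->
  (\int[@lebesgue_measure R]_x (f0 x)%:E = 1)%E ->
  0 < c -> 0 < sigma ->
  (loc_scale_prob f0 mu sigma [set x | (sigma <= `|x| / c)%R] +
   \int[@lebesgue_measure R]_(z in `](- c - mu / sigma)%R, (c - mu / sigma)%R[) (f0 z)%:E
   = 1)%E.
Proof.
move=> hm hpos htot c0 s0.
have mf : forall D, measurable_fun D (fun x => (f0 x)%:E).
  by move=> D; apply/measurable_EFinP; exact: measurable_funTS.
rewrite /loc_scale_prob.
set J := `](- c - mu / sigma)%R, (c - mu / sigma)%R[%classic.
have -> : [set x | sigma <= `|x| / c] =
    (fun x : R => (x - mu) / sigma)%R @^-1` (~` J).
  by apply/seteqP; split => x /=; move/(@set_eq_aux R sigma mu c x s0 c0).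
rewrite affine_integral//.
rewrite -ge0_integral_setU//.
- by rewrite setvU; exact: htot.
- by apply: measurableC; exact: measurable_itv.
- exact: measurable_itv.
- exact: mf.
- by move=> x _; rewrite lee_fin.
- by apply: disjP => x h1 h2; exact: h1.
- by apply: measurableC; exact: measurable_itv.
Qed.

Lemma fin_aux (R : realType) (p : \bar R) (f : R) :
  (p + f%:E = 1%:E)%E -> p = (1 - f)%:E.
Proof.
case: p => [r| |] //= h.
move: h => /eqP; rewrite eqe => /eqP h; congr EFin; lra.
Qed.

Theorem theorem3p1 (R : realType) (f0 : R -> R) (alpha c : R) :
  is_prob_density f0 ->
  (forall z, f0 (- z) = f0 z) ->
  (forall x y, 0 <= x -> x < y -> f0 y < f0 x) ->
  0 < alpha < 1 ->
  0 < c ->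
  (\int[@lebesgue_measure R]_(z in `[0%R, c]) (f0 z)%:E)%E = (alpha / 2)%:E ->
  ereal_inf [set p | exists mu sigma : R, 0 < sigma /\
                  p = loc_scale_prob f0 mu sigma [set x | sigma <= `|x| / c]]
  = (1 - alpha)%:E.
Proof.
move=> [hm hpos htot] hs hd /andP[a0 a1] c0 hc.
have Jc := @alpha_oo R f0 alpha c hm hpos hs c0 hc.
apply/eqP; rewrite eq_le; apply/andP; split.
  apply: ge_ereal_inf.
  exists (loc_scale_prob f0 0 1 [set x | 1 <= `|x| / c]).
    by exists 0, 1; split.
  have h := @key R f0 c 0 1 hm hpos htot c0 ltr01.
  rewrite mul0r !subr0 Jc in h.
  by rewrite (@fin_aux R _ _ h).
apply: le_ereal_inf_tmp => _ [mu [sigma [s0 ->]]].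
have h := @key R f0 c mu sigma hm hpos htot c0 s0.
have hF := @Fbound R f0 c (mu / sigma) hm hpos hs hd c0.
rewrite Jc in hF.
have F0 : (0 <= \int[@lebesgue_measure R]_(z in `](- c - mu / sigma)%R, (c - mu / sigma)%R[) (f0 z)%:E)%E.
  by apply: integral_ge0 => x _; rewrite lee_fin.
move: h hF F0.
case: (\int[@lebesgue_measure R]_(z in `](- c - mu / sigma)%R, (c - mu / sigma)%R[) (f0 z)%:E)%E => [f| |] // h hF F0.
rewrite (@fin_aux R _ _ h) lee_fin.
rewrite lee_fin in hF; lra.
Qed.
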